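(* For any set system $\Omega$ there is an integer $K_\Omega$ such that for all $k\ge K_\Omega$, the set system $k\Omega$ belongs to $\mathfrak{BC}$. That is, every complex zero $q$ of $H_{k\Omega}(q)$ satisfies $|q|\le1$.
   Context: A set system $\Omega$ on a finite set $E$ is a nonempty collection of subsets of $E$ (its faces). Let $d=d_\Omega$ be the maximum size of a face, let $f_i$ be the number of faces of size $i$, and let $F_\Omega(z)=\sum_{i=0}^df_iz^i$. The $H$-polynomial is $H_\Omega(q)=(1-q)^dF_\Omega\big(\frac{q}{1-q}\big)$. $\mathfrak{BC}$ is the class of set systems whose $H$-polynomial is Schur quasi-stable, i.e. has all complex zeros in $|q|\le1$. For a positive integer $k$, $k\Omega$ is the set system on $E\times\{1,\ldots,k\}$ defined as follows: $\{(e_1,i_1),\ldots,(e_r,i_r)\}$ is a face of $k\Omega$ if and only if $e_1,\ldots,e_r$ are pairwise distinct and $\{e_1,\ldots,e_r\}\in\Omega$. *)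

(* Defs.v *)
From HB Require Import structures.
From mathcomp Require Import all_boot all_order all_algebra all_field.
Set Implicit Arguments. Unset Strict Implicit. Unset Printing Implicit Defensive.
Import Order.TTheory GRing.Theory Num.Theory.

(* A set system on a finite ground set E is Om : {set {set E}} with Om != set0. *)

Definition fnum (E : finType) (Om : {set {set E}}) (i : nat) : nat :=
  #|[set S in Om | #|S| == i]|.

Definition dimss (E : finType) (Om : {set {set E}}) : nat :=
  \max_(S in Om) #|S|.

Local Open Scope ring_scope.

(* H_Om(q) = (1-q)^d F(q/(1-q)) = sum_i f_i q^i (1-q)^(d-i), over the complex
   algebraic numbers algC (H has integer coefficients, so all its complex
   zeros lie in algC). *)
Definition Hpoly (E : finType) (Om : {set {set E}}) : {poly algC} :=
  \sum_(i < (dimss Om).+1)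
     (fnum Om i)%:R *: ('X ^+ i * (1 - 'X) ^+ (dimss Om - i)).

Definition in_BC (E : finType) (Om : {set {set E}}) : Prop :=
  forall z : algC, root (Hpoly Om) z -> `|z| <= 1.

Definition kmult (E : finType) (Om : {set {set E}}) (k : nat)
  : {set {set (E * 'I_k)}} :=
  [set S : {set (E * 'I_k)} |
     [forall x in S, forall y in S, (x.1 == y.1) ==> (x == y)]
     && ((fun x : E * 'I_k => x.1) @: S \in Om)].

(* Main.v *)
Require Import Defs.
From mathcomp Require Import ring.

From mathcomp Require Import all_boot all_order all_algebra all_field.
Set Implicit Arguments. Unset Strict Implicit. Unset Printing Implicit Defensive.
Import Order.TTheory GRing.Theory Num.Theory.

Section Comb.
Variables (E : finType) (k : nat).

Definition valid (S : {set (E * 'I_k)}) :=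
  [forall x in S, forall y in S, (x.1 == y.1) ==> (x == y)].
Definition proj (S : {set (E * 'I_k)}) : {set E} := (fun x : E * 'I_k => x.1) @: S.

Lemma validP (S : {set (E * 'I_k)}) : reflect {in S &, forall x y, x.1 = y.1 -> x = y} (valid S).
Proof.
apply: (iffP forallP) => H.
  move=> x y xS yS exy; have /implyP := H x; rewrite xS => /(_ isT) /forallP /(_ y).
  by rewrite yS exy eqxx /= => /eqP.
move=> x; apply/implyP => xS; apply/forallP => y; apply/implyP => yS.
by apply/implyP => /eqP e; apply/eqP; apply: H.
Qed.

Lemma card_proj (S : {set (E * 'I_k)}) : valid S -> #|proj S| = #|S|.
Proof. by move=> /validP H; rewrite card_in_imset. Qed.

Definition phi (f : {ffun E -> option 'I_k}) : {set (E * 'I_k)} :=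
  [set p | f p.1 == Some p.2].

Lemma phi_inj : injective phi.
Proof.
move=> f g e; apply/ffunP => x.
have key : forall j, (f x == Some j) = (g x == Some j).
  by move=> j; have := congr1 (fun A : {set E * 'I_k} => (x, j) \in A) e; rewrite /= !inE.
case fx: (f x) => [j|]; case gx: (g x) => [j'|] //.
- by have := key j; rewrite fx gx eqxx => /esym/eqP.
- by have := key j; rewrite fx gx eqxx.
- by have := key j'; rewrite fx gx eqxx.
Qed.

Definition FT (T : {set E}) (x : E) : pred (option 'I_k) :=
  if x \in T then [pred o | o != None] else pred1 None.

Lemma card_FT T : #|family (FT T)| = k ^ #|T|.
Proof.
rewrite card_family.
have -> : foldr muln 1 [seq #|FT T x| | x : E] = \prod_(x : E) #|FT T x|.
  by rewrite foldrE big_image.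
have -> : \prod_(x : E) #|FT T x| = \prod_(x : E) (if x \in T then k else 1).
  apply: eq_bigr => x _; rewrite /FT; case: ifP => _; last by rewrite card1.
  by rewrite cardC1 card_option card_ord.
by rewrite -big_mkcond /= prod_nat_const.
Qed.


Lemma fiber_eq (T : {set E}) :
  [set S | valid S && (proj S == T)] = phi @: family (FT T).
Proof.
apply/setP => S; rewrite inE; apply/idP/imsetP.
- case/andP => /validP vS /eqP pS.
  pose f := [ffun x => [pick j | (x, j) \in S]].
  have memS : forall x j, ((x, j) \in S) = (f x == Some j).
    move=> x j; rewrite ffunE; case: pickP => [j' Sj'|].
      apply/idP/eqP => [Sj|[<-]//].
      by have [] := vS _ _ Sj Sj' erefl => ->.
    by move=> /(_ j) ->.
  exists f.
    apply/familyP => x; rewrite /FT -pS.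
    case: ifP => [/imsetP[[y j] Sy /= ->]|xn] /=.
      by rewrite memS in Sy; rewrite (eqP Sy).
    rewrite ffunE; case: pickP => [j Sj|//].
    by rewrite (imset_f _ Sj) in xn.
  by apply/setP => -[x j]; rewrite inE memS.
- case=> f /familyP fF ->; apply/andP; split.
    apply/validP => -[x i] [y j]; rewrite !inE /= => /eqP fx /eqP fy exy.
    by subst y; rewrite fx in fy; case: fy => ->.
  apply/eqP/setP => x; have := fF x; rewrite /FT.
  case: ifP => xT /=.
    case fx: (f x) => [j|] // _; apply/imsetP; exists (x, j) => //.
    by rewrite inE fx.
  move=> /eqP fx; apply/imsetP => -[[y j]]; rewrite inE /= => /eqP fy ey.
  by subst y; rewrite fx in fy.
Qed.

Lemma card_fiber (T : {set E}) :
  #|[set S | valid S && (proj S == T)]| = k ^ #|T|.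
Proof. by rewrite fiber_eq card_imset ?card_FT //; apply: phi_inj. Qed.

End Comb.

Lemma kmultE (E : finType) (Om : {set {set E}}) k :
  kmult Om k = [set S | valid S && (proj S \in Om)].
Proof. by []. Qed.

Lemma fnum_kmult (E : finType) (Om : {set {set E}}) k i :
  fnum (kmult Om k) i = (k ^ i * fnum Om i)%N.
Proof.
rewrite /fnum kmultE -sum1_card.
rewrite (partition_big (@proj E k) (fun T => (T \in Om) && (#|T| == i))); last first.
  move=> S; rewrite !inE => /andP[/andP[vS ->]]; by rewrite card_proj.
rewrite /= -[in RHS]sum1_card big_distrr /=.
apply: eq_big => [T|T]; first by rewrite inE.
move=> /andP[TOm /eqP Ti].
rewrite muln1 -Ti -card_fiber sum1_card; apply: eq_card => S.
rewrite -[X in X = _]topredE /= !inE; apply/idP/idP.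
  by move=> /andP[/andP[/andP[-> _] _] ->].
case/andP => vS /eqP pS; by rewrite vS -card_proj // pS TOm !eqxx.
Qed.

Lemma dimss_kmult (E : finType) (Om : {set {set E}}) k :
  (0 < k)%N -> dimss (kmult Om k) = dimss Om.
Proof.
move=> k0; apply/eqP; rewrite eqn_leq; apply/andP; split.
  apply/bigmax_leqP => S; rewrite kmultE inE => /andP[vS pS].
  by rewrite -card_proj // (leq_bigmax_cond _ pS).
apply/bigmax_leqP => T TOm.
pose j0 : 'I_k := Ordinal k0.
pose S := (fun x => (x, j0)) @: T.
have vS : valid S.
  by apply/validP => _ _ /imsetP[x _ ->] /imsetP[y _ ->] /= ->.
have pS : proj S = T.
  apply/setP => x; apply/imsetP/idP => [[_ /imsetP[y yT ->] ->]//|xT].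
  by exists (x, j0) => //; apply: imset_f.
have : S \in kmult Om k by rewrite kmultE inE vS pS TOm.
move=> H; rewrite -pS card_proj //; exact: (leq_bigmax_cond _ H).
Qed.
Local Open Scope ring_scope.

Lemma cauchy (d : nat) (a : nat -> nat) (z : algC) :
  (0 < a d)%N -> \sum_(i < d.+1) (a i)%:R * z ^+ i = 0 ->
  `|z| <= 1 + (\sum_(i < d.+1) a i)%:R.
Proof.
move=> ad0 hz.
have [z1|z1] := real_leP (normr_real z) (real1 algC).
  by apply: le_trans z1 _; rewrite lerDl ler0n.
case: d ad0 hz => [|d] ad0 hz.
  by move: hz; rewrite big_ord1 expr0 mulr1 => /eqP; rewrite pnatr_eq0 => /eqP h; by rewrite h in ad0.
move: hz; rewrite big_ord_recr /= => /eqP; rewrite addrC addr_eq0 => /eqP hz.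
have z0 : 0 < `|z| by apply: lt_trans z1.
have zX0 : 0 < `|z| ^+ d by rewrite exprn_gt0.
set N' := (\sum_(i < d.+1) a i)%N.
have H1 : `|z| ^+ d.+1 <= N'%:R * `|z| ^+ d.
  apply: (@le_trans _ _ `|(a d.+1)%:R * z ^+ d.+1|).
    rewrite normrM normrX normr_nat ler_peMl ?exprn_ge0 //.
    by rewrite ler1n.
  rewrite hz normrN; apply: le_trans (ler_norm_sum _ _ _) _.
  rewrite /N' natr_sum mulr_suml; apply: ler_sum => i _.
  rewrite normrM normr_nat normrX ler_wpM2l ?ler0n //.
  by apply: ler_weXn2l; [exact: ltW | rewrite -ltnS].
have H2 : `|z| <= N'%:R by rewrite -(ler_pM2r zX0) -exprS.
apply: le_trans H2 _.
rewrite -[1 + _]/((1%:R : algC) + _) -natrD ler_nat /N' [in X in (_ <= X)%N]big_ord_recr /=.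
by rewrite addnCA leq_addr.
Qed.

Lemma top_pos (E : finType) (Om : {set {set E}}) :
  Om != set0 -> (0 < fnum Om (dimss Om))%N.
Proof.
move=> Om0; have : (0 < #|Om|)%N by rewrite card_gt0.
case/(eq_bigmax_cond (fun S : {set E} => #|S|)) => S SOm eS.
rewrite /fnum card_gt0; apply/set0Pn; exists S.
by rewrite inE SOm /dimss eS eqxx.
Qed.

Lemma key_identity (u z kk a : algC) (i d : nat) : u != 0 -> (i <= d)%N ->
  kk ^+ i * a * (z ^+ i * u ^+ (d - i)) = u ^+ d * (a * (kk * z / u) ^+ i).
Proof.
move=> u0 id; rewrite -(subnK id) exprD addnK expr_div_n exprMn.
have ui : u ^+ i != 0 by rewrite expf_neq0.
move: (u ^+ i) ui (u ^+ (d - i)) => U U0 A.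
by field.
Qed.

Theorem proposition6p2 (E : finType) (Om : {set {set E}}) :
  Om != set0 ->
  exists K : nat, forall k : nat, (0 < k)%N -> (K <= k)%N -> in_BC (kmult Om k).
Proof.
move=> Om0.
set d := dimss Om.
pose a := fnum Om.
pose N := (\sum_(i < d.+1) a i)%N.
exists (2 * N + 3)%N => k k0 Kk z.
rewrite /root /Hpoly dimss_kmult // horner_sum => /eqP hz.
have [//|z1] := real_leP (normr_real z) (real1 algC).
exfalso.
have u0 : 1 - z != 0.
  apply/eqP => /eqP; rewrite subr_eq0 => /eqP ez.
  by move: z1; rewrite -ez normr1 ltxx.
set u := 1 - z in u0 hz.
pose w := k%:R * z / u.
have hw : \sum_(i < d.+1) (a i)%:R * w ^+ i = 0.
  have : u ^+ d * \sum_(i < d.+1) (a i)%:R * w ^+ i = 0.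
    rewrite -[RHS]hz mulr_sumr; apply: eq_bigr => i _.
    rewrite hornerZ !hornerE fnum_kmult natrM natrX -/u.
    by rewrite -[RHS]mulrA key_identity ?mulrA // -ltnS.
  by move/eqP; rewrite mulf_eq0 expf_eq0 (negbTE u0) andbF => /eqP.
have hc := cauchy (top_pos Om0) hw.
have z0 : 0 < `|z| by apply: lt_trans z1.
have hwu : k%:R * `|z| = `|w| * `|u|.
  by rewrite -normrM /w divfK // normrM normr_nat.
have hu : `|u| <= 1 + `|z| by rewrite /u (le_trans (ler_normB _ _)) ?normr1.
have H1 : k%:R * `|z| <= (2 * (1 + N%:R)) * `|z|.
  rewrite hwu; apply: (@le_trans _ _ (`|w| * (2 * `|z|))).
    apply: ler_wpM2l => //; rewrite mulr_natl mulr2n.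
    apply: le_trans hu _; rewrite lerD2r; exact: ltW.
  rewrite mulrCA -mulrA; apply: ler_wpM2l; first by rewrite ler0n.
  by apply: ler_wpM2r.
rewrite ler_pM2r // in H1.
have : ((2 * N + 3)%N%:R : algC) <= 2 * (1 + N%:R).
  by apply: le_trans H1; rewrite ler_nat.
rewrite -[2 * (1 + _)]/((2%:R : algC) * (1%:R + N%:R)) -natrD -natrM ler_nat.
by rewrite mulnDr ltn_geF // addnC ltn_add2l.
Qed.
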